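(* Let $L=\langle S,A,\to\rangle$ be a labelled transition system. For all $x,y\in\{o,b\}$, the relation $\equiv_{E(x,y)}$ is an $(x,y)$-generic bisimulation.
   Context: An LTS is $\langle S,A,\to\rangle$ with states $S$, actions $A$ containing the internal action $\tau$, and $\to\subseteq S\times A\times S$; write $s\xrightarrow{a}t$, and $\twoheadrightarrow$ for the reflexive-transitive closure of $\xrightarrow{\tau}$. For $R\subseteq S\times S$ and $s,s',t$: $s\twoheadrightarrow_{o,R,t}s'$ iff $s\twoheadrightarrow s'$; $s\twoheadrightarrow_{b,R,t}s'$ iff $s\twoheadrightarrow s'$, $t\,R\,s$ and $t\,R\,s'$. For $x,y\in\{o,b\}$, a symmetric $R$ is an $(x,y)$-generic bisimulation if whenever $s\,R\,t$ and $s\xrightarrow{a}s'$, either $a=\tau$ and $s'\,R\,t$, or there exist $t',t_1,t_2$ with $t\twoheadrightarrow_{x,R,s}t_1\xrightarrow{a}t_2\twoheadrightarrow_{y,R,s'}t'$ and $s'\,R\,t'$. Generic bisimulation game. Let $\frown,\smile$ be formal tags and $E\subseteq\{\frown,\smile\}$. Spoiler-owned configurations $\langle (s,t),c,m,r\rangle_S$ and Duplicator-owned $\langle (s,t),c,m,r\rangle_D$ have $(s,t)\in S\times S$, $c\in (A\times S)\cup\{\dagger\}$, $m\in (S\times\{\frown,\smile\})\cup\{\dagger\}$, $r\in\{*,\checkmark\}$. From $\langle (s,t),c,m,r\rangle_S$ Spoiler may: (S1) move to $\langle (s,t),c,m,*\rangle_D$ if $c\neq\dagger$; (S2a) for some $s\xrightarrow{a}s'$,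 move to $\langle (s,t),(a,s'),(t,\frown),*\rangle_D$ if $c=\dagger$; (S2b) for some $s\xrightarrow{a}s'$, move to $\langle (s,t),(a,s'),(t,\frown),\checkmark\rangle_D$ if $c\neq (a,s')$; (S3) for some $t\xrightarrow{a}t'$, move to $\langle (t,s),(a,t'),(s,\frown),\checkmark\rangle_D$. From $\langle (u,v),(a,u'),(\bar v,f),r\rangle_D$ Duplicator may: (D1) move to $\langle (u',\bar v),\dagger,\dagger,\checkmark\rangle_S$ if $a=\tau$; (D2) if $f=\frown$ and $\bar v\xrightarrow{a}v'$: (a) move to $\langle (u',v'),(a,u'),(v',\smile),*\rangle_S$, or (b) move to $\langle (u',v'),\dagger,\dagger,\checkmark\rangle_S$, or (c) only if $\smile\in E$, move to $\langle (u,v),(a,u'),(v',\smile),*\rangle_S$; (D3) for some $\bar v\xrightarrow{\tau}v'$: (a) move to $\langle (u,v'),(a,u'),(v',f),*\rangle_S$, or (b) only if $f=\smile$, move to $\langle (u',v'),\dagger,\dagger,\checkmark\rangle_S$, or (c) only if $f\in E$, move to $\langle (u,v),(a,u'),(v',f),*\rangle_S$. Duplicator wins a finite play if Spoiler gets stuck, and an infinite play if it has infinitely many $\checkmark$ rewards; other plays are won by Spoiler. $s\equiv_E t$ iff Duplicator has a strategy winning all plays from $\langle (s,t),\dagger,\dagger,*\rangle_S$. $E(x,y)$ is the smallest set with $\frown\in E(o,y)$ and $\smile\in E(x,o)$ for all $x,y\in\{o,b\}$. *)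

(* Defs.v *)
From Stdlib Require Import List Relations.

Record LTS := {
  St : Type;
  Act : Type;
  tau : Act;
  step : St -> Act -> St -> Prop
}.

Arguments tau {_}.
Arguments step {_}.

Definition taustar (L : LTS) : relation (St L) :=
  clos_refl_trans (St L) (fun s t => step s tau t).

Inductive ob := o | b.

Definition tstep (L : LTS) (x : ob) (R : St L -> St L -> Prop)
  (t s s' : St L) : Prop :=
  match x with
  | o => taustar L s s'
  | b => taustar L s s' /\ R t s /\ R t s'
  end.

Definition generic_bisim (L : LTS) (x y : ob) (R : St L -> St L -> Prop) : Prop :=
  (forall s t, R s t -> R t s) /\
  (forall s t s' a, R s t -> step s a s' ->
     (a = tau /\ R s' t) \/
     (exists t' t1 t2, tstep L x R s t t1 /\ step t1 a t2 /\
                       tstep L y R s' t2 t' /\ R s' t')).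

Inductive tag := Frown | Smile.
Inductive player := Spoiler | Duplicator.

Record conf (L : LTS) := Conf {
  owner : player;
  pos : St L * St L;
  chal : option (Act L * St L);   (* c ; None = dagger *)
  mem : option (St L * tag);      (* m ; None = dagger *)
  rew : bool                      (* r ; true = checkmark, false = * *)
}.
Arguments Conf {_}.
Arguments owner {_}.
Arguments pos {_}.
Arguments chal {_}.
Arguments mem {_}.
Arguments rew {_}.

Inductive move (L : LTS) (E : tag -> Prop) : conf L -> conf L -> Prop :=
| S1 s t c m r : c <> None ->
    move L E (Conf Spoiler (s,t) c m r) (Conf Duplicator (s,t) c m false)
| S2a s t m r a s' : step s a s' ->
    move L E (Conf Spoiler (s,t) None m r)
             (Conf Duplicator (s,t) (Some (a,s')) (Some (t,Frown)) false)
| S2b s t c m r a s' : step s a s' -> c <> Some (a,s') ->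
    move L E (Conf Spoiler (s,t) c m r)
             (Conf Duplicator (s,t) (Some (a,s')) (Some (t,Frown)) true)
| S3 s t c m r a t' : step t a t' ->
    move L E (Conf Spoiler (s,t) c m r)
             (Conf Duplicator (t,s) (Some (a,t')) (Some (s,Frown)) true)
| D1 u v a u' vb f r : a = tau ->
    move L E (Conf Duplicator (u,v) (Some (a,u')) (Some (vb,f)) r)
             (Conf Spoiler (u',vb) None None true)
| D2a u v a u' vb r v' : step vb a v' ->
    move L E (Conf Duplicator (u,v) (Some (a,u')) (Some (vb,Frown)) r)
             (Conf Spoiler (u',v') (Some (a,u')) (Some (v',Smile)) false)
| D2b u v a u' vb r v' : step vb a v' ->
    move L E (Conf Duplicator (u,v) (Some (a,u')) (Some (vb,Frown)) r)
             (Conf Spoiler (u',v') None None true)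
| D2c u v a u' vb r v' : step vb a v' -> E Smile ->
    move L E (Conf Duplicator (u,v) (Some (a,u')) (Some (vb,Frown)) r)
             (Conf Spoiler (u,v) (Some (a,u')) (Some (v',Smile)) false)
| D3a u v a u' vb f r v' : step vb tau v' ->
    move L E (Conf Duplicator (u,v) (Some (a,u')) (Some (vb,f)) r)
             (Conf Spoiler (u,v') (Some (a,u')) (Some (v',f)) false)
| D3b u v a u' vb r v' : step vb tau v' ->
    move L E (Conf Duplicator (u,v) (Some (a,u')) (Some (vb,Smile)) r)
             (Conf Spoiler (u',v') None None true)
| D3c u v a u' vb f r v' : step vb tau v' -> E f ->
    move L E (Conf Duplicator (u,v) (Some (a,u')) (Some (vb,f)) r)
             (Conf Spoiler (u,v) (Some (a,u')) (Some (v',f)) false).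

(* A (history-dependent) Duplicator strategy maps the history
   [p_0; ...; p_i] (current position last) to the chosen next position. *)
Definition strategy (L : LTS) := list (conf L) -> conf L.

Definition hist {L : LTS} (p : nat -> conf L) (i : nat) : list (conf L) :=
  map p (seq 0 (S i)).

Definition consistent_prefix (L : LTS) (E : tag -> Prop) (sigma : strategy L)
  (c0 : conf L) (p : nat -> conf L) (n : nat) : Prop :=
  p 0 = c0 /\
  forall i, i < n ->
    move L E (p i) (p (S i)) /\
    (owner (p i) = Duplicator -> p (S i) = sigma (hist p i)).

(* sigma wins every play from c0: it always prescribes a legal move in
   Duplicator positions (so every finite maximal play ends with Spoiler
   stuck), and every infinite play has infinitely many checkmarks. *)
Definition dup_wins (L : LTS) (E : tag -> Prop) (sigma : strategy L)
  (c0 : conf L) : Prop :=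
  (forall p n, consistent_prefix L E sigma c0 p n ->
     owner (p n) = Duplicator -> move L E (p n) (sigma (hist p n))) /\
  (forall p, (forall n, consistent_prefix L E sigma c0 p n) ->
     forall N, exists i, N <= i /\ rew (p i) = true).

Definition game_equiv (L : LTS) (E : tag -> Prop) (s t : St L) : Prop :=
  exists sigma : strategy L,
    dup_wins L E sigma (Conf Spoiler (s,t) None None false).

Definition Exy (x y : ob) (f : tag) : Prop :=
  (f = Frown /\ x = o) \/ (f = Smile /\ y = o).

(* Main.v *)
Require Import Defs.
From Stdlib Require Import List Relations Arith Lia Classical ClassicalEpsilon.
Import ListNotations.

Fixpoint build {X : Type} (x0 : X) (g : list X -> nat -> X) (n : nat) : list X :=
  match n with O => [x0] | S m => build x0 g m ++ [g (build x0 g m) m] end.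

Lemma build_last {X} (x0 : X) g m : last (build x0 g (S m)) x0 = g (build x0 g m) m.
Proof. simpl. apply last_last. Qed.

Lemma build_map {X} (x0 : X) g n :
  build x0 g n = map (fun i => last (build x0 g i) x0) (seq 0 (S n)).
Proof.
  induction n. reflexivity.
  rewrite seq_S, map_app, <- IHn. simpl (0 + S n). cbn [map]. rewrite (build_last x0 g n). reflexivity.
Qed.

Lemma build_ext {X} (x0 : X) g1 g2 n :
  (forall l m, m < n -> g1 l m = g2 l m) -> build x0 g1 n = build x0 g2 n.
Proof.
  induction n; intros H. reflexivity.
  simpl. rewrite IHn by (intros; apply H; lia). rewrite H by lia. reflexivity.
Qed.

Lemma hist_build (L : LTS) (x0 : conf L) g n :
  hist (fun i => last (build x0 g i) x0) n = build x0 g n.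
Proof. unfold hist. symmetry. apply build_map. Qed.

Lemma hist_nth (L : LTS) (p : nat -> conf L) i j d : j <= i -> nth j (hist p i) d = p j.
Proof.
  intros H. unfold hist. rewrite nth_indep with (d' := p 0).
  rewrite map_nth, seq_nth by lia. reflexivity.
  rewrite length_map, length_seq. lia.
Qed.

Lemma hist_length (L : LTS) (p : nat -> conf L) i : length (hist p i) = S i.
Proof. unfold hist. rewrite length_map, length_seq. reflexivity. Qed.

Definition W (L : LTS) (E : tag -> Prop) (c : conf L) := exists sigma, dup_wins L E sigma c.

Lemma eventually_const (B : nat) : forall d (f : nat -> nat),
  B - f 0 <= d -> (forall i, f i <= f (S i)) -> (forall i, f i <= B) ->
  exists M, forall i, M <= i -> f i = f M.
Proof.
  induction d; intros f Hd Hm Hb.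
  - exists 0. intros i _. assert (forall i, f 0 <= f i).
    { induction i0. lia. specialize (Hm i0). lia. }
    specialize (H i). specialize (Hb i). lia.
  - destruct (classic (forall i, f i = f 0)) as [H|H].
    + exists 0. intros; auto.
    + apply not_all_ex_not in H. destruct H as [i Hi].
      assert (Hmono : forall j k, j <= k -> f j <= f k).
      { intros j k Hjk. induction Hjk. lia. specialize (Hm m). lia. }
      assert (f 0 < f i) by (specialize (Hmono 0 i); lia).
      destruct (IHd (fun j => f (i + j))) as [M HM].
      * specialize (Hb i). rewrite Nat.add_0_r. lia.
      * intros j. rewrite Nat.add_succ_r. apply Hm.
      * intros; apply Hb.
      * exists (i + M). intros k Hk. specialize (HM (k - i)). 
        replace (i + (k - i)) with k in HM by lia. apply HM. lia.
Qed.

Definition step_ok (L : LTS) (E : tag -> Prop) (Q : nat -> conf L -> conf L -> Prop)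
  (sg : strategy L) (k : nat) (c d' : conf L) (l : list (conf L)) (kd : nat * conf L) : Prop :=
  move L E c (snd kd) /\ Q (fst kd) d' (snd kd) /\ k <= fst kd /\
  (fst kd = k -> rew (snd kd) = true -> rew d' = true) /\
  (owner c = Duplicator -> snd kd = sg l).

Definition nx (L : LTS) E Q sg k0 (c0 : conf L) (l : list (nat * conf L)) (d' : conf L) :=
  let kc := last l (k0, c0) in
  epsilon (inhabits (k0, c0)) (step_ok L E Q sg (fst kc) (snd kc) d' (map snd l)).

Definition oh (L : LTS) E Q sg k0 (c0 : conf L) (p' : nat -> conf L) n :=
  build (k0, c0) (fun l m => nx L E Q sg k0 c0 l (p' (S m))) n.

Definition Fd (L : LTS) E (Q : nat -> conf L -> conf L -> Prop) sg k0 (c0 c0' : conf L) (p' : nat -> conf L) n :=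
  let l := oh L E Q sg k0 c0 p' n in
  let kc := last l (k0, c0) in
  epsilon (inhabits c0') (fun d' => move L E (p' n) d' /\
     exists k', Q k' d' (sg (map snd l)) /\ fst kc <= k' /\
       (k' = fst kc -> rew (sg (map snd l)) = true -> rew d' = true)).

Definition sig' (L : LTS) E Q sg k0 (c0 c0' : conf L) (h : list (conf L)) :=
  Fd L E Q sg k0 c0 c0' (fun i => nth i h c0') (pred (length h)).

Lemma oh_ext L E Q sg k0 c0 p1 p2 n : (forall j, j <= n -> p1 j = p2 j) ->
  oh L E Q sg k0 c0 p1 n = oh L E Q sg k0 c0 p2 n.
Proof.
  intros H. unfold oh. apply build_ext. intros l m Hm. rewrite H by lia. reflexivity.
Qed.

Lemma sig'_hist L E Q sg k0 c0 c0' p' i :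
  sig' L E Q sg k0 c0 c0' (hist p' i) = Fd L E Q sg k0 c0 c0' p' i.
Proof.
  unfold sig'. rewrite hist_length. simpl pred. unfold Fd.
  rewrite (oh_ext L E Q sg k0 c0 (fun j => nth j (hist p' i) c0') p' i)
    by (intros; apply hist_nth; auto).
  rewrite hist_nth by lia. reflexivity.
Qed.

Lemma transfer (L : LTS) (E : tag -> Prop) (Q : nat -> conf L -> conf L -> Prop) (B : nat)
 (Hb : forall k c' c, Q k c' c -> k <= B)
 (Ho : forall k c' c, Q k c' c -> owner c' = owner c)
 (HS : forall k c' c d', Q k c' c -> owner c = Spoiler -> move L E c' d' ->
     exists k' d, move L E c d /\ Q k' d' d /\ k <= k' /\ (k' = k -> rew d = true -> rew d' = true))
 (HD : forall k c' c d, Q k c' c -> owner c = Duplicator -> move L E c d ->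
     exists k' d', move L E c' d' /\ Q k' d' d /\ k <= k' /\ (k' = k -> rew d = true -> rew d' = true)) :
 forall k0 c0' c0, Q k0 c0' c0 -> W L E c0 -> W L E c0'.
Proof.
  intros k0 c0' c0 HQ0 [sg [Hw1 Hw2]].
  exists (sig' L E Q sg k0 c0 c0').
  pose (q := fun p' i => last (oh L E Q sg k0 c0 p' i) (k0, c0)).
  pose (po := fun p' i => snd (q p' i)).
  assert (Hmap : forall p' i, map snd (oh L E Q sg k0 c0 p' i) = hist (po p') i).
  { intros p' i. unfold oh. rewrite build_map. unfold hist. rewrite map_map. reflexivity. }
  assert (Step : forall p' n i, consistent_prefix L E (sig' L E Q sg k0 c0 c0') c0' p' n -> i < n ->
     consistent_prefix L E sg c0 (po p') i -> Q (fst (q p' i)) (p' i) (po p' i) ->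
     step_ok L E Q sg (fst (q p' i)) (po p' i) (p' (S i)) (hist (po p') i) (q p' (S i))).
  { intros p' n i [H0 Hc] Hi Hci HQ.
    assert (Eq : q p' (S i) = nx L E Q sg k0 c0 (oh L E Q sg k0 c0 p' i) (p' (S i))).
    { unfold q, oh. rewrite build_last. reflexivity. }
    rewrite Eq. unfold nx. rewrite <- Hmap. fold (q p' i).
    apply epsilon_spec.
    destruct (Hc i Hi) as [Hmv HD'].
    destruct (owner (po p' i)) eqn:Eo.
    - destruct (HS _ _ _ _ HQ Eo Hmv) as [k' [d [H1 [H2 [H3 H4]]]]].
      exists (k', d). unfold step_ok. simpl. fold (po p' i).
      repeat split; auto. intros Hx; rewrite Hx in Eo; discriminate.
    - assert (Eo' : owner (p' i) = Duplicator) by (rewrite (Ho _ _ _ HQ); auto).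
      specialize (HD' Eo'). rewrite sig'_hist in HD'.
      assert (Hm : move L E (po p' i) (sg (hist (po p') i))).
      { apply Hw1; auto. }
      destruct (HD _ _ _ _ HQ Eo Hm) as [k' [d' [H1 [H2 [H3 H4]]]]].
      assert (Hsp : move L E (p' i) (p' (S i)) /\
         exists k', Q k' (p' (S i)) (sg (map snd (oh L E Q sg k0 c0 p' i))) /\
         fst (q p' i) <= k' /\
         (k' = fst (q p' i) -> rew (sg (map snd (oh L E Q sg k0 c0 p' i))) = true -> rew (p' (S i)) = true)).
      { rewrite HD'. unfold Fd. apply epsilon_spec. exists d'. split; auto.
        exists k'. rewrite Hmap. fold (q p' i). auto. }
      destruct Hsp as [_ [k'' [G1 [G2 G3]]]].
      rewrite Hmap in G1, G3.
      exists (k'', sg (hist (po p') i)). unfold step_ok; simpl. fold (po p' i).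
      repeat split; auto. intros _; rewrite Hmap; reflexivity. }
  assert (Inv : forall p' n, consistent_prefix L E (sig' L E Q sg k0 c0 c0') c0' p' n ->
     forall i, i <= n -> consistent_prefix L E sg c0 (po p') i /\ Q (fst (q p' i)) (p' i) (po p' i)).
  { intros p' n Hc i. induction i; intros Hi.
    - destruct Hc as [H0 _]. split.
      + split. reflexivity. intros; lia.
      + rewrite H0. exact HQ0.
    - destruct IHi as [IH1 IH2]. lia.
      destruct (Step p' n i Hc ltac:(lia) IH1 IH2) as [S1 [S2 [S3 [S4 S5]]]].
      split; [|exact S2].
      destruct IH1 as [C0 C1]. split. exact C0.
      intros j Hj. destruct (Nat.eq_dec j i) as [->|Hne].
      + split. exact S1. intros Ho'. apply S5 in Ho'. unfold po at 2. exact Ho'.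
      + apply C1. lia. }
  split.
  - intros p' n Hc Hown. rewrite sig'_hist.
    destruct (Inv p' n Hc n (le_n _)) as [I1 I2].
    assert (Hm : move L E (po p' n) (sg (hist (po p') n))).
    { apply Hw1; auto. rewrite <- (Ho _ _ _ I2). auto. }
    destruct (HD _ _ _ _ I2 ltac:(rewrite <- (Ho _ _ _ I2); auto) Hm) as [k' [d' [H1 [H2 [H3 H4]]]]].
    assert (Hsp : move L E (p' n) (Fd L E Q sg k0 c0 c0' p' n) /\
         exists k', Q k' (Fd L E Q sg k0 c0 c0' p' n) (sg (map snd (oh L E Q sg k0 c0 p' n))) /\
         fst (q p' n) <= k' /\
         (k' = fst (q p' n) -> rew (sg (map snd (oh L E Q sg k0 c0 p' n))) = true ->
            rew (Fd L E Q sg k0 c0 c0' p' n) = true)).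
    { unfold Fd at 1 2 3. apply epsilon_spec. exists d'. split; auto.
      exists k'. rewrite Hmap. fold (q p' n). auto. }
    apply Hsp.
  - intros p' Hc.
    assert (Hall : forall i, consistent_prefix L E sg c0 (po p') i /\ Q (fst (q p' i)) (p' i) (po p' i)).
    { intros i. apply (Inv p' i (Hc i) i (le_n _)). }
    assert (Hst : forall i, step_ok L E Q sg (fst (q p' i)) (po p' i) (p' (S i)) (hist (po p') i) (q p' (S i))).
    { intros i. apply (Step p' (S i) i (Hc (S i)) ltac:(lia)); apply Hall. }
    destruct (eventually_const B (B - fst (q p' 0)) (fun i => fst (q p' i)) (le_n _))
      as [M HM].
    { intros i. apply (Hst i). }
    { intros i. apply (Hb _ _ _ (proj2 (Hall i))). }
    intros N0. destruct (Hw2 (po p') (fun i => proj1 (Hall i)) (S (N0 + M))) as [i [Hi Hr]].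
    exists i. split. lia.
    destruct i as [|j]. lia.
    destruct (Hst j) as [_ [_ [_ [S4 _]]]].
    apply S4; auto.
    simpl in HM. rewrite (HM (S j)), (HM j) by lia. reflexivity.
Qed.

Lemma map_seq_shift {X} (f : nat -> X) n : forall k st,
  map f (seq (n + st) k) = map (fun j => f (n + j)) (seq st k).
Proof.
  induction k; intros st. reflexivity.
  simpl. f_equal. replace (S (n + st)) with (n + S st) by lia. apply IHk.
Qed.

Definition comb {X} (p p' : nat -> X) n j := if j <? n then p j else p' (j - n).

Lemma suffix (L : LTS) E sg c0 p n :
  dup_wins L E sg c0 -> consistent_prefix L E sg c0 p n -> W L E (p n).
Proof.
  intros [Hw1 Hw2] [Hp0 Hpc].
  exists (fun h => sg (map p (seq 0 n) ++ h)).
  assert (Hcomb : forall p' : nat -> conf L, p' 0 = p n ->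
    let pc := comb p p' n in
    (forall k, k <= n -> pc k = p k) /\ (forall i, pc (n + i) = p' i) /\
    (forall i, hist pc (n + i) = map p (seq 0 n) ++ hist p' i)).
  { intros p' H0 pc.
    assert (A1 : forall k, k <= n -> pc k = p k).
    { intros k Hk. unfold pc, comb. destruct (k <? n) eqn:E1. reflexivity.
      apply Nat.ltb_ge in E1. replace k with n by lia. rewrite Nat.sub_diag. auto. }
    assert (A2 : forall i, pc (n + i) = p' i).
    { intros i. unfold pc, comb. destruct (n + i <? n) eqn:E1. apply Nat.ltb_lt in E1; lia.
      f_equal. lia. }
    split; [exact A1|split; [exact A2|]].
    intros i. unfold hist. replace (S (n + i)) with (n + S i) by lia.
    rewrite seq_app, map_app. f_equal.
    - apply map_ext_in. intros a Ha. apply in_seq in Ha. apply A1. lia.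
    - replace (0 + n) with (n + 0) by lia. rewrite map_seq_shift. apply map_ext. intros; apply A2. }
  assert (Hcons : forall p' m, consistent_prefix L E (fun h => sg (map p (seq 0 n) ++ h)) (p n) p' m ->
     consistent_prefix L E sg c0 (comb p p' n) (n + m)).
  { intros p' m [H0 Hc].
    destruct (Hcomb p' H0) as [A1 [A2 A3]].
    set (pc := comb p p' n) in *.
    split.
    - rewrite A1 by lia. auto.
    - intros j Hj. destruct (le_lt_dec n j) as [Hnj|Hnj].
      + replace j with (n + (j - n)) by lia. rewrite A3.
        replace (S (n + (j - n))) with (n + S (j - n)) by lia. rewrite !A2.
        apply Hc. lia.
      + rewrite (A1 j), (A1 (S j)) by lia.
        assert (Hh : hist pc j = hist p j).
        { unfold hist. apply map_ext_in. intros a Ha. apply in_seq in Ha. apply A1. lia. }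
        rewrite Hh. apply Hpc. lia. }
  split.
  - intros p' m Hc Hown.
    pose proof (Hcons p' m Hc) as Hc'.
    destruct Hc as [H0 _]. destruct (Hcomb p' H0) as [A1 [A2 A3]].
    rewrite <- A3. rewrite <- A2. apply Hw1; auto. rewrite A2; auto.
  - intros p' Hc N.
    destruct (Hc 0) as [H0 _]. destruct (Hcomb p' H0) as [A1 [A2 A3]].
    assert (Hall : forall k, consistent_prefix L E sg c0 (comb p p' n) k).
    { intros k. destruct (Hcons p' k (Hc k)) as [B0 B1]. split; auto. intros; apply B1; lia. }
    destruct (Hw2 _ Hall (n + N)) as [i [Hi Hr]].
    exists (i - n). split. lia. rewrite <- A2. replace (n + (i - n)) with i by lia. exact Hr.
Qed.

Definition S1step {L : LTS} (c : conf L) : conf L :=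
  Conf Duplicator (pos c) (chal c) (mem c) false.

Inductive Path (L : LTS) (E : tag -> Prop) : conf L -> Prop :=
| PEnd c d : move L E c d -> W L E d -> chal d = None -> Path L E c
| PStep c d : move L E c d -> W L E d -> chal d <> None -> Path L E (S1step d) -> Path L E c.

Lemma dmove_rew (L : LTS) E c d : move L E c d -> owner c = Duplicator -> chal d <> None -> rew d = false.
Proof. intros H; destruct H; simpl; intros; congruence. Qed.

Lemma s1_move (L : LTS) E (e : conf L) : owner e = Spoiler -> chal e <> None -> move L E e (S1step e).
Proof. destruct e as [o0 [p1 p2] c0 m0 r0]; simpl; intros; subst. apply S1; auto. Qed.

Lemma path_of_W (L : LTS) E c : W L E c -> owner c = Duplicator -> Path L E c.
Proof.
  intros [sg [Hw1 Hw2]] Hown. apply NNPP. intros Hnp.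
  pose (g := fun (l : list (conf L)) (m : nat) =>
     let e := last l c in match owner e with Duplicator => sg l | Spoiler => S1step e end).
  pose (q := fun i => last (build c g i) c).
  assert (Hh : forall i, hist q i = build c g i) by (intros; apply hist_build).
  assert (Hq : forall i, q (S i) = match owner (q i) with Duplicator => sg (hist q i) | Spoiler => S1step (q i) end).
  { intros i. unfold q at 1. rewrite build_last. rewrite Hh. reflexivity. }
  pose (Good := fun e : conf L => (owner e = Duplicator /\ ~ Path L E e) \/
      (owner e = Spoiler /\ chal e <> None /\ ~ Path L E (S1step e))).
  assert (Inv : forall n, consistent_prefix L E sg c q n /\ Good (q n) /\ (1 <= n -> rew (q n) = false)).
  { induction n.
    - split. split. reflexivity. intros; lia. split. left. split; auto. intros; lia.
    - destruct IHn as [[C0 C1] [G R]].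
      assert (Hmv : move L E (q n) (q (S n)) /\ (owner (q n) = Duplicator -> q (S n) = sg (hist q n))).
      { rewrite Hq. destruct G as [[G1 G2]|[G1 [G2 G3]]]; rewrite G1.
        - split; auto. apply Hw1; auto. split; auto.
        - split. apply s1_move; auto. congruence. }
      assert (Cn : consistent_prefix L E sg c q (S n)).
      { split; auto. intros j Hj. destruct (Nat.eq_dec j n). subst j; auto. apply C1; lia. }
      split. exact Cn.
      destruct G as [[G1 G2]|[G1 [G2 G3]]].
      + assert (Wd : W L E (q (S n))) by (apply (suffix L E sg c q (S n)); [split; auto | auto]).
        destruct (classic (chal (q (S n)) = None)) as [Hn|Hn].
        { exfalso. apply G2. eapply PEnd; eauto. apply Hmv. }
        split.
        * right. split.
          { destruct Hmv as [Hm _]. destruct Hm; simpl in *; congruence. }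
          split; auto. intros Hp. apply G2. eapply PStep; eauto. apply Hmv.
        * intros _. apply (dmove_rew L E (q n)); auto. apply Hmv.
      + rewrite Hq, G1. split.
        * left. split. reflexivity. exact G3.
        * reflexivity. }
  destruct (Hw2 q (fun n => proj1 (Inv n)) 1) as [i [Hi Hr]].
  destruct (Inv i) as [_ [_ R]]. rewrite R in Hr by lia. discriminate.
Qed.

Inductive Rel (L : LTS) (E : tag -> Prop) : nat -> conf L -> conf L -> Prop :=
| R4 c : Rel L E 4 c c
| R3 o p ch m r r' : Rel L E 3 (Conf o p ch m r') (Conf o p ch m r)
| R2 u v a r r' : step u a u ->
    Rel L E 2 (Conf Spoiler (u,v) (Some (a,u)) (Some (v,Frown)) r') (Conf Spoiler (u,v) None None r)
| R1D u v a r r' : ~ E Smile -> step u a u ->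
    Rel L E 1 (Conf Duplicator (u,v) (Some (a,u)) (Some (v,Frown)) r')
              (Conf Duplicator (u,v) (Some (a,u)) (Some (v,Smile)) r)
| R1S u v a r r' : ~ E Smile -> step u a u ->
    Rel L E 1 (Conf Spoiler (u,v) (Some (a,u)) (Some (v,Frown)) r')
              (Conf Spoiler (u,v) (Some (a,u)) (Some (v,Smile)) r)
| R0ii u v r r' : Rel L E 0 (Conf Spoiler (u,v) None None r') (Conf Spoiler (v,u) None None r)
| R0iii u v a w r r' :
    Rel L E 0 (Conf Spoiler (u,v) None None r') (Conf Spoiler (u,v) (Some (a,w)) (Some (v,Frown)) r)
| R0iv u v a r r' : ~ E Smile ->
    Rel L E 0 (Conf Spoiler (u,v) None None r') (Conf Spoiler (u,v) (Some (a,u)) (Some (v,Smile)) r).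

Lemma move_rew (L : LTS) E o p ch m r1 r2 d :
  move L E (Conf o p ch m r1) d -> move L E (Conf o p ch m r2) d.
Proof.
  intros H. inversion H; subst.
  - apply S1; auto.
  - apply S2a; auto.
  - apply S2b; auto.
  - apply S3; auto.
  - apply D1; auto.
  - apply D2a; auto.
  - apply D2b; auto.
  - apply D2c; auto.
  - apply D3a; auto.
  - apply D3b; auto.
  - apply D3c; auto.
Qed.

Tactic Notation "fin" constr(kk) open_constr(dd) tactic3(mv) :=
  exists kk, dd; split; [ mv | split; [ constructor; eauto | split; [lia | intros; try discriminate; try lia; auto ] ] ].

Lemma Rel_HS (L : LTS) E k c' c d' : Rel L E k c' c -> owner c = Spoiler -> move L E c' d' ->
  exists k' d, move L E c d /\ Rel L E k' d' d /\ k <= k' /\ (k' = k -> rew d = true -> rew d' = true).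
Proof.
  intros HR Ho Hm. destruct HR.
  - fin 4 _ (exact Hm).
  - fin 4 _ (eapply move_rew; exact Hm).
  - inversion Hm; subst.
    + fin 4 ((Conf Duplicator (u,v) (Some (a,u)) (Some (v,Frown)) false)) (apply S2a; eauto).
    + fin 3 ((Conf Duplicator (u,v) (Some (a0,s')) (Some (v,Frown)) false)) (apply S2a; eauto).
    + fin 4 _ (apply S3; eauto).
  - discriminate.
  - inversion Hm; subst.
    + fin 1 ((Conf Duplicator (u,v) (Some (a,u)) (Some (v,Smile)) false)) (apply S1; congruence).
    + fin 4 _ (apply S2b; eauto).
    + fin 4 _ (apply S3; eauto).
  - inversion Hm; subst.
    + congruence.
    + fin 3 ((Conf Duplicator (u,v) (Some (a,s')) (Some (v,Frown)) true)) (apply S3; eauto).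
    + fin 4 _ (apply S3; eauto).
    + fin 4 _ (apply S2b; eauto; congruence).
  - inversion Hm; subst.
    + congruence.
    + destruct (classic (Some (a,w) = Some (a0,s' : St L))) as [He|He].
      * injection He; intros; subst.
        fin 4 _ (apply S1; congruence).
      * fin 3 ((Conf Duplicator (u,v) (Some (a0,s')) (Some (v,Frown)) true)) (apply S2b; eauto).
    + destruct (classic (Some (a,w) = Some (a0,s' : St L))) as [He|He].
      * injection He; intros; subst.
        fin 3 ((Conf Duplicator (u,v) (Some (a0,s')) (Some (v,Frown)) false)) (apply S1; congruence).
      * fin 4 _ (apply S2b; eauto).
    + fin 4 _ (apply S3; eauto).
  - inversion Hm; subst.
    + congruence.
    + destruct (classic (Some (a,u) = Some (a0,s' : St L))) as [He|He].
      * injection He; intros; subst.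
        fin 1 ((Conf Duplicator (s',v) (Some (a0,s')) (Some (v,Smile)) false)) (apply S1; congruence).
      * fin 3 ((Conf Duplicator (u,v) (Some (a0,s')) (Some (v,Frown)) true)) (apply S2b; eauto).
    + destruct (classic (Some (a,u) = Some (a0,s' : St L))) as [He|He].
      * injection He; intros; subst.
        fin 1 ((Conf Duplicator (s',v) (Some (a0,s')) (Some (v,Smile)) false)) (apply S1; congruence).
      * fin 4 _ (apply S2b; eauto).
    + fin 4 _ (apply S3; eauto).
Qed.

Lemma Rel_HD (L : LTS) E k c' c d : Rel L E k c' c -> owner c = Duplicator -> move L E c d ->
  exists k' d', move L E c' d' /\ Rel L E k' d' d /\ k <= k' /\ (k' = k -> rew d = true -> rew d' = true).
Proof.
  intros HR Ho Hm. destruct HR; try discriminate.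
  - fin 4 _ (exact Hm).
  - fin 4 _ (eapply move_rew; exact Hm).
  - inversion Hm; subst.
    + fin 4 _ (apply D1; eauto).
    + fin 1 ((Conf Spoiler (u,v') (Some (a,u)) (Some (v',Frown)) false)) (apply D3a; eauto).
    + fin 2 ((Conf Spoiler (u,v') (Some (a,u)) (Some (v',Frown)) false)) (apply D3a; eauto).
    + contradiction.
Qed.

Lemma Rel_transfer (L : LTS) E k c' c : Rel L E k c' c -> W L E c -> W L E c'.
Proof.
  apply (transfer L E (Rel L E) 4).
  - intros k0 c1 c2 H; destruct H; lia.
  - intros k0 c1 c2 H; destruct H; reflexivity.
  - apply Rel_HS.
  - apply Rel_HD.
Qed.

Lemma ge_of_none (L : LTS) E u v r : W L E (Conf Spoiler (u,v) None None r) -> game_equiv L E u v.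
Proof. intros H. exact (Rel_transfer L E _ _ _ (R3 L E Spoiler (u,v) None None r false) H). Qed.

Lemma ge_of_frown (L : LTS) E u v a w r :
  W L E (Conf Spoiler (u,v) (Some (a,w)) (Some (v,Frown)) r) -> game_equiv L E u v.
Proof. intros H. exact (Rel_transfer L E _ _ _ (R0iii L E u v a w r false) H). Qed.

Lemma ge_of_smile (L : LTS) E u v a r : ~ E Smile ->
  W L E (Conf Spoiler (u,v) (Some (a,u)) (Some (v,Smile)) r) -> game_equiv L E u v.
Proof. intros Hn H. exact (Rel_transfer L E _ _ _ (R0iv L E u v a r false Hn) H). Qed.

Lemma ge_sym (L : LTS) E u v : game_equiv L E v u -> game_equiv L E u v.
Proof. intros H. exact (Rel_transfer L E _ _ _ (R0ii L E u v false false) H). Qed.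

Lemma Exy_smile x y : Exy x y Smile -> y = o.
Proof. intros [[H _]|[_ H]]; [discriminate|auto]. Qed.
Lemma Exy_frown x y : Exy x y Frown -> x = o.
Proof. intros [[_ H]|[H _]]; [auto|discriminate]. Qed.
Lemma Exy_nsmile x : ~ Exy x b Smile.
Proof. intros H. apply Exy_smile in H. discriminate. Qed.

Lemma smile_phase (L : LTS) (x y : ob) (s t s' t1 t2 : St L) (a : Act L) :
  let R := game_equiv L (Exy x y) in
  tstep L x R s t t1 -> step t1 a t2 ->
  forall c, Path L (Exy x y) c -> forall u v vb r,
  c = Conf Duplicator (u,v) (Some (a,s')) (Some (vb,Smile)) r ->
  tstep L y R s' t2 vb -> (y = b -> u = s' /\ v = vb) ->
  exists t' t1 t2, tstep L x R s t t1 /\ step t1 a t2 /\ tstep L y R s' t2 t' /\ R s' t'.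
Proof.
  intros R G1 G2 c HP. induction HP as [c d Hm Wd Hn|c d Hm Wd Hn HP IH];
    intros u v vb r -> H1 H2.
  - inversion Hm; subst; simpl in Hn; try discriminate.
    + exists vb, t1, t2. repeat split; auto. eapply ge_of_none; eauto.
    + assert (Rv : R s' v') by (eapply ge_of_none; eauto).
      exists v', t1, t2. repeat split; auto.
      destruct y; simpl in *.
      * eapply rt_trans; [exact H1|apply rt_step; auto].
      * destruct H1 as [A1 [A2 A3]]. repeat split; auto.
        eapply rt_trans; [exact A1|apply rt_step; auto].
  - inversion Hm; subst; simpl in Hn; try congruence.
    + apply (IH u v' v' false); [reflexivity| |].
      * destruct y; simpl in *.
        -- eapply rt_trans; [exact H1|apply rt_step; auto].
        -- destruct H1 as [A1 [A2 A3]]. destruct (H2 eq_refl) as [-> ->].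
           repeat split; auto. eapply rt_trans; [exact A1|apply rt_step; auto].
           eapply ge_of_smile; eauto. apply Exy_nsmile.
      * intros Hy. destruct (H2 Hy); subst; auto.
    + apply Exy_smile in H10. subst y.
      apply (IH u v v' false); [reflexivity| |].
      * simpl in *. eapply rt_trans; [exact H1|apply rt_step; auto].
      * discriminate.
Qed.

Lemma tstep_refl (L : LTS) y (R : St L -> St L -> Prop) s' v : R s' v -> tstep L y R s' v v.
Proof. destruct y; simpl; intros; repeat split; auto; apply rt_refl. Qed.

Lemma frown_phase (L : LTS) (x y : ob) (s t s' : St L) (a : Act L) :
  let R := game_equiv L (Exy x y) in
  forall c, Path L (Exy x y) c -> forall v vb r,
  c = Conf Duplicator (s,v) (Some (a,s')) (Some (vb,Frown)) r ->
  tstep L x R s t vb -> (vb = t \/ exists t1, tstep L x R s t t1 /\ step t1 tau vb) ->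
  (x = b -> v = vb) ->
  (a = tau /\ R s' t) \/
  exists t' t1 t2, tstep L x R s t t1 /\ step t1 a t2 /\ tstep L y R s' t2 t' /\ R s' t'.
Proof.
  intros R c HP. induction HP as [c d Hm Wd Hn|c d Hm Wd Hn HP IH];
    intros v vb r -> G F H3.
  - inversion Hm; subst; simpl in Hn; try discriminate.
    + assert (Rv : R s' vb) by (eapply ge_of_none; eauto).
      destruct F as [->|[t1 [F1 F2]]].
      * left; auto.
      * right. exists vb, t1, vb. repeat split; auto. apply tstep_refl; auto.
    + assert (Rv : R s' v') by (eapply ge_of_none; eauto).
      right. exists v', vb, v'. repeat split; auto. apply tstep_refl; auto.
  - inversion Hm; subst; simpl in Hn; try congruence.
    + (* D2a *)
      right. eapply (smile_phase L x y s t s' vb v' a G); [eassumption | exact HP | reflexivity | | ].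
      * destruct y.
        -- apply rt_refl.
        -- apply tstep_refl. eapply ge_of_smile; eauto. apply Exy_nsmile.
      * auto.
    + (* D2c *)
      right. match goal with Hs : Exy _ _ Smile |- _ => apply Exy_smile in Hs end. subst y.
      eapply (smile_phase L x o s t s' vb v' a G); [eassumption | exact HP | reflexivity | | ].
      * apply rt_refl.
      * discriminate.
    + (* D3a *)
      apply (IH v' v' false); [reflexivity| | |auto].
      * destruct x; simpl in *.
        -- eapply rt_trans; [exact G|apply rt_step; auto].
        -- destruct G as [A1 [A2 A3]]. repeat split; auto.
           eapply rt_trans; [exact A1|apply rt_step; auto].
           eapply ge_of_frown; eauto.
      * right. exists vb. auto.
    + (* D3c *)
      match goal with Hs : Exy _ _ Frown |- _ => apply Exy_frown in Hs end. subst x.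
      apply (IH v v' false); [reflexivity| | |discriminate].
      * simpl in *. eapply rt_trans; [exact G|apply rt_step; auto].
      * right. exists vb. auto.
Qed.

Theorem lemma5p10 (L : LTS) (x y : ob) :
  generic_bisim L x y (game_equiv L (Exy x y)).
Proof.
  split.
  - intros s t H. apply ge_sym. exact H.
  - intros s t s' a H Hst.
    pose (I := Conf Spoiler (s,t) None None false : conf L).
    pose (d0 := Conf Duplicator (s,t) (Some (a,s')) (Some (t,Frown)) false : conf L).
    assert (Wd : W L (Exy x y) d0).
    { destruct H as [sg Hsg].
      apply (suffix L (Exy x y) sg I (fun i => match i with 0 => I | _ => d0 end) 1 Hsg).
      split. reflexivity. intros i Hi. assert (i = 0) by lia. subst i.
      split. apply S2a. exact Hst. discriminate. }
    assert (HP : Path L (Exy x y) d0) by (apply path_of_W; auto).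
    apply (frown_phase L x y s t s' a d0 HP t t false eq_refl).
    + destruct x; simpl. apply rt_refl. repeat split; auto. apply rt_refl.
    + left; reflexivity.
    + auto.
Qed.
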